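(* Let $(\pi_r)_{r\in\mathbb{N}}$ be periods and let $(k_t)_{t\in\mathbb{N}}$ be the multiperiodic sequence with periods $(\pi_r)$ and seeds $\sigma_r=1$ for all $r\in\mathbb{N}$. Let $w_r:=\inf\{t\in\mathbb{N}: k_t=r\}$. If $r\in\mathbb{N}$ is such that $\pi_i\ge 2$ for all $1\le i\le r-1$, then $$w_r=\left\lceil\cdots\left\lceil\left\lceil\frac{\pi_{r-1}}{\pi_{r-1}-1}\right\rceil\frac{\pi_{r-2}}{\pi_{r-2}-1}\right\rceil\cdots\frac{\pi_1}{\pi_1-1}\right\rceil,$$ i.e. $w_r=u_1$ where $u_r:=1$ and $u_{i}:=\lceil u_{i+1}\,\pi_{i}/(\pi_{i}-1)\rceil$ for $i=r-1,r-2,\dots,1$ (so $w_1=1$).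
   Context: $\mathbb{N}=\{1,2,3,\dots\}$. Multiperiodic sequence: given periods $\pi_r\in\mathbb{N}$ and seeds $\sigma_r\in\{1,\dots,\pi_r\}$, the sequence $(k_t)_{t\in\mathbb{N}}$ with values in $\mathbb{N}\cup\{\infty\}$ is defined by requiring, for each $r$, that the subsequence $(k^{(r)}_t)_{t\in\mathbb{N}}$ obtained by deleting all tokens $k_t<r$ satisfies $k^{(r)}_t=r\iff t\equiv\sigma_r\pmod{\pi_r}$; entries left undefined for all $r$ are set to $\infty$. Equivalently: clocks $\phi_r$ start at $\sigma_r$; for each token, scan $r=1,2,\dots$, decrementing each clock with $\phi_r>1$, until the first $r$ with $\phi_r=1$, output $k_t=r$ and reset $\phi_r=\pi_r$. *)

(* Defs.v *)
From mathcomp Require Import all_boot.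
Set Implicit Arguments. Unset Strict Implicit. Unset Printing Implicit Defensive.

(* Multiperiodic sequence, following the "subsequence" definition.
   Indices t, positions j and levels r are 1-based naturals.
   [hit pi sigma r j] : the j-th token of the level-r subsequence
   (tokens with k_t >= r) has value r, i.e. j = sigma_r (mod pi_r). *)
Definition hit (pi sigma : nat -> nat) (r j : nat) : bool :=
  j %% pi r == sigma r %% pi r.

(* [lvl pi sigma n t] = Some j iff token t survives into the level-(n+1)
   subsequence (i.e. k_t >= n+1) and is its j-th entry (1-based);
   None if it was deleted (k_t < n+1). *)
Fixpoint lvl (pi sigma : nat -> nat) (n t : nat) : option nat :=
  match n with
  | 0 => Some t
  | n'.+1 =>
      match lvl pi sigma n' t with
      | None => None
      | Some j =>
          if hit pi sigma n'.+1 j then None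
          else Some (j - count (hit pi sigma n'.+1) (iota 1 j))
      end
  end.

(* [kval pi sigma t r] : k_t = r  (for t, r >= 1). *)
Definition kval (pi sigma : nat -> nat) (t r : nat) : bool :=
  (0 < r) &&
  match lvl pi sigma r.-1 t with
  | Some j => hit pi sigma r j
  | None => false
  end.

Definition ceildiv (a b : nat) : nat := (a + b.-1) %/ b.

(* [uu pi r d] = u_{r-d}, where u_r = 1 and
   u_i = ceil (u_{i+1} * pi_i / (pi_i - 1)). *)
Fixpoint uu (pi : nat -> nat) (r d : nat) : nat :=
  match d with
  | 0 => 1
  | d'.+1 => let i := r - d'.+1 in ceildiv (uu pi r d' * pi i) (pi i - 1)
  end.

(* Main.v *)
Require Import Defs.
From mathcomp Require Import all_boot zify.

Definition cnt p j := count (fun x => x %% p == 1 %% p) (iota 1 j).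

Lemma cnt_formula k j : cnt k.+2 j = (j + k.+1) %/ k.+2.
Proof.
elim: j => [|j IH]; first by rewrite /cnt /= divn_small.
rewrite /cnt (_ : iota 1 j.+1 = iota 1 j ++ [:: j.+1]); last by rewrite -(addn1 j) iotaD add1n addn1.
rewrite count_cat -/(cnt _ _) IH /= addn0.
rewrite (_ : j.+1 + k.+1 = (j + k.+1).+1); last lia.
rewrite divnS // addnC; congr (_ + _).
rewrite (_ : (j + k.+1).+1 = j + k.+2); last lia.
rewrite dvdn_addl ?dvdnn // /dvdn.
rewrite -(addn1 j) (_ : 1 %% k.+2 = (0 + 1) %% k.+2) // eqn_modDr mod0n.
by case: (j %% k.+2 == 0).
Qed.

Lemma cE k a b : b < k.+2 -> cnt k.+2 (a * k.+2 + b) = a + (0 < b).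
Proof.
move=> hb; rewrite cnt_formula.
case: b hb => [|b] hb.
  by rewrite addn0 divnMDl // divn_small.
rewrite (_ : a * k.+2 + b.+1 + k.+1 = (a+1) * k.+2 + b); last lia.
by rewrite divnMDl // divn_small; lia.
Qed.

Lemma gE k a e : e < k.+1 ->
  ceildiv ((a * k.+1 + e) * k.+2) (k.+2 - 1) = a * k.+2 + e + (0 < e).
Proof.
move=> he; rewrite /ceildiv (_ : k.+2 - 1 = k.+1); last lia.
case: e he => [|e] he.
  rewrite addn0 (_ : a * k.+1 * k.+2 + k.+1.-1 = (a * k.+2) * k.+1 + k); last nia.
  rewrite divnMDl // divn_small //; lia.
rewrite (_ : (a * k.+1 + e.+1) * k.+2 + k.+1.-1 = (a * k.+2 + e.+2) * k.+1 + e); last nia.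
by rewrite divnMDl // divn_small; lia.
Qed.

Lemma modE k a b : b < k.+2 -> (a * k.+2 + b) %% k.+2 = b.
Proof. by move=> hb; rewrite modnMDl modn_small. Qed.

Lemma stepA k m : 0 < m ->
  let j := ceildiv (m * k.+2) (k.+2 - 1) in
  j %% k.+2 != 1 %% k.+2 /\ j - cnt k.+2 j = m /\ 0 < j.
Proof.
move=> hm /=.
have hd := divn_eq m k.+1.
have he : m %% k.+1 < k.+1 by rewrite ltn_pmod.
move: hd he hm; set a := m %/ k.+1; set e := m %% k.+1 => hd he hm.
rewrite hd gE //.
have h1 : 1 %% k.+2 = 1 by rewrite modn_small.
case: e hd he => [|e] hd he.
  rewrite !addn0 (_ : a * k.+2 = a * k.+2 + 0) ?addn0 //.
  rewrite -{1}(addn0 (a * k.+2)) modE // h1 /=.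
  have := cE k a 0 isT; rewrite !addn0 /= => ->; split => //; split; nia.
rewrite (_ : a*k.+2 + e.+1 + (0<e.+1) = a*k.+2 + e.+2); last by simpl; lia.
rewrite modE; last lia.
rewrite cE; last lia.
rewrite h1; split; first by [].
simpl; lia.
Qed.

Lemma stepB k j : j %% k.+2 != 1 %% k.+2 ->
  ceildiv ((j - cnt k.+2 j) * k.+2) (k.+2 - 1) = j /\ (0 < j -> 0 < j - cnt k.+2 j).
Proof.
have hd := divn_eq j k.+2.
have hb : j %% k.+2 < k.+2 by rewrite ltn_pmod.
move: hd hb; set a := j %/ k.+2; set b := j %% k.+2 => hd hb.
have h1 : 1 %% k.+2 = 1 by rewrite modn_small.
rewrite h1 hd cE // => hb1.
case: b hd hb hb1 => [|b] hd hb hb1.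
  rewrite !addn0 (_ : a * k.+2 - a = a * k.+1 + 0); last nia.
  rewrite gE //= addn0 addn0; split => //; nia.
case: b hd hb hb1 => [|b] hd hb hb1; first by [].
rewrite (_ : a * k.+2 + b.+2 - (a + (0 < b.+2)) = a * k.+1 + b.+1); last (simpl; nia).
rewrite gE /=; last lia.
split; lia.
Qed.

Definition g (pi : nat -> nat) i m := ceildiv (m * pi i) (pi i - 1).
Fixpoint G pi n j := match n with 0 => j | n'.+1 => G pi n' (g pi n'.+1 j) end.

Lemma g_mono pi i m1 m2 : m1 <= m2 -> g pi i m1 <= g pi i m2.
Proof. by move=> h; rewrite /g /ceildiv leq_div2r // leq_add2r leq_mul2r h orbT. Qed.

Lemma G_mono pi n m1 m2 : m1 <= m2 -> G pi n m1 <= G pi n m2.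
Proof. by elim: n m1 m2 => [|n IH] m1 m2 h //=; apply/IH/g_mono. Qed.

Lemma L1 pi n : (forall i, 1 <= i <= n -> 2 <= pi i) ->
  forall j, 0 < j -> lvl pi (fun _ => 1) n (G pi n j) = Some j.
Proof.
elim: n => [|n IH] hyp j hj //=.
have [k hk] : exists k, pi n.+1 = k.+2.
  have hp : 2 <= pi n.+1 by apply: hyp; lia.
  by exists (pi n.+1).-2; lia.
have := @stepA k j hj; rewrite /= => -[h1 [h2 h3]].
rewrite IH; last by rewrite /g hk.
  have -> : hit pi (fun=>1) n.+1 (g pi n.+1 j) = false by rewrite /hit /g hk (negbTE h1).
  have -> : count (hit pi (fun=>1) n.+1) (iota 1 (g pi n.+1 j)) = cnt k.+2 (g pi n.+1 j) by rewrite /cnt /hit hk.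
  by rewrite /g hk h2.
move=> i /andP [hi1 hi2]; apply: hyp; lia.
Qed.

Lemma L2 pi n : (forall i, 1 <= i <= n -> 2 <= pi i) ->
  forall t j, 0 < t -> lvl pi (fun _ => 1) n t = Some j -> 0 < j /\ G pi n j <= t.
Proof.
elim: n => [|n IH] hyp t j ht /=; first by move=> [<-].
have [k hk] : exists k, pi n.+1 = k.+2.
  have hp : 2 <= pi n.+1 by apply: hyp; lia.
  by exists (pi n.+1).-2; lia.
have hyp' : forall i, 1 <= i <= n -> 2 <= pi i.
  move=> i /andP [hi1 hi2]; apply: hyp; lia.
case E: (lvl pi (fun _ => 1) n t) => [j'|] //.
have [hj' hG] := IH hyp' t j' ht E.
rewrite /hit hk; case: ifP => // hh [<-].
have hh' : j' %% k.+2 != 1 %% k.+2 by rewrite hh.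
have [e1 e2] := @stepB k j' hh'.
rewrite (_ : count _ (iota 1 j') = cnt k.+2 j'); last by [].
split; first exact: e2.
by rewrite /g hk e1.
Qed.

Lemma L3 pi r n : n <= r.-1 -> G pi n (uu pi r (r.-1 - n)) = uu pi r r.-1.
Proof.
elim: n => [|n IH] hn /=; first by rewrite subn0.
rewrite -IH; last lia.
congr (G _ _ _).
rewrite (_ : r.-1 - n = (r.-1 - n.+1).+1); last lia.
rewrite /= /g (_ : r - (r.-1 - n.+1).+1 = n.+1) //; lia.
Qed.

Theorem theorem2 (pi : nat -> nat) (r : nat)
  (hpi : forall i, 0 < pi i) (hr : 0 < r)
  (h2 : forall i, 1 <= i <= r.-1 -> 2 <= pi i) :
  kval pi (fun _ => 1) (uu pi r r.-1) r /\
  (forall t, 0 < t -> kval pi (fun _ => 1) t r -> uu pi r r.-1 <= t).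
Proof.
have E := @L3 pi r r.-1 (leqnn r.-1); rewrite subnn /= in E.
rewrite -E; split.
  by rewrite /kval hr (@L1 pi r.-1 h2) // /hit eqxx.
move=> t ht /andP [_]; case F: (lvl _ _ _ _) => [j|] // _.
have [hj hG] := @L2 pi r.-1 h2 t j ht F.
exact: leq_trans (@G_mono pi r.-1 1 j hj) hG.
Qed.
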